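(* For $d\ge 4$ and $\ell\ge 3$, the subKautz digraph $sK(d,\ell)$ has diameter $2\ell-1$.
   Context: The subKautz digraph $sK(d,\ell)$ ($d,\ell\ge2$) has vertex set $\{x_1\ldots x_\ell\in\mathbb Z_{d+1}^\ell : x_i\neq x_{i+1},\ i=1,\ldots,\ell-1\}$ and arcs $x_1\ldots x_\ell\to x_2\ldots x_\ell x_{\ell+1}$ for every $x_{\ell+1}\in\mathbb Z_{d+1}$ with $x_{\ell+1}\neq x_1,x_\ell$. The diameter is the maximum directed distance between ordered pairs of vertices. *)

(* Defs.v *)
From mathcomp Require Import all_boot.
Unset Strict Implicit. Unset Printing Implicit Defensive.

(* Symbols: Z_{d+1} represented by 'I_(d.+1) (only the set of d+1 labels matters). *)

Definition sK_vertex (d l : nat) (x : seq 'I_d.+1) : bool :=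
  (size x == l) && sorted (fun a b : 'I_d.+1 => a != b) x.

Definition sK_arc (d l : nat) (x y : seq 'I_d.+1) : bool :=
  [&& sK_vertex d l x, sK_vertex d l y &
   [exists z : 'I_d.+1,
      [&& z != nth z x 0, z != nth z x (l.-1) & y == rcons (behead x) z]]].

Definition sK_walk (d l k : nat) (x y : seq 'I_d.+1) : Prop :=
  exists p : seq (seq 'I_d.+1),
    [/\ size p = k, path (sK_arc d l) x p & last x p = y].

Definition sK_diameter_is (d l D : nat) : Prop :=
  (forall x y, sK_vertex d l x -> sK_vertex d l y ->
     exists k, k <= D /\ sK_walk d l k x y) /\
  (exists x y, [/\ sK_vertex d l x, sK_vertex d l y &
     forall k, sK_walk d l k x y -> D <= k]).

(* Main.v *)
Require Import Defs.
From mathcomp Require Import all_boot zify.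

Definition win (d l : nat) (w : nat -> 'I_d.+1) (i : nat) : seq 'I_d.+1 :=
  mkseq (fun t => w (i + t)) l.

Lemma win_nth d l w i t x0 : t < l -> nth x0 (win d l w i) t = w (i + t).
Proof. by move=> H; rewrite /win nth_mkseq. Qed.

Lemma size_win d l w i : size (win d l w i) = l.
Proof. by rewrite /win size_mkseq. Qed.

Lemma vertex_win d l (w : nat -> 'I_d.+1) i :
  (forall t, i <= t -> t.+1 < i + l -> w t != w t.+1) -> sK_vertex d l (win d l w i).
Proof.
move=> H; rewrite /sK_vertex size_win eqxx /=.
apply/(sortedP (w 0)) => t; rewrite size_win => Ht.
rewrite !win_nth; [|lia|lia]. rewrite addnS; apply: H; lia.
Qed.

Lemma arc_win d l (w : nat -> 'I_d.+1) i : 0 < l ->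
  (forall t, i <= t -> t.+1 < i + l.+1 -> w t != w t.+1) -> w (i + l) != w i ->
  sK_arc d l (win d l w i) (win d l w i.+1).
Proof.
move=> l0 H Hi; rewrite /sK_arc !vertex_win /=; first last.
- move=> t h1 h2; apply: H; lia.
- move=> t h1 h2; apply: H; lia.
apply/existsP; exists (w (i + l)).
rewrite win_nth // addn0 Hi /= win_nth; last lia.
have -> : i + l.-1 = (i + l).-1 by lia.
have := H (i + l).-1; have -> : (i + l).-1.+1 = i + l by lia.
rewrite eq_sym => ->; [|lia|lia]; rewrite /=.
apply/eqP; apply: (eq_from_nth (x0 := w 0)).
  by rewrite size_rcons size_behead !size_win; lia.
move=> t; rewrite size_win => Ht.
rewrite nth_rcons size_behead size_win.
case: ltnP => h1.
  rewrite nth_behead !win_nth; [|lia|lia]. by rewrite addSnnS.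
have -> : t = l.-1 by lia.
rewrite eqxx win_nth; last lia. congr w; lia.
Qed.

Lemma walk_win d l (w : nat -> 'I_d.+1) k : 0 < l ->
  (forall t, t.+1 < l + k -> w t != w t.+1) -> (forall j, j < k -> w (l + j) != w j) ->
  sK_walk d l k (win d l w 0) (win d l w k).
Proof.
move=> l0 Ha Hv.
exists (mkseq (fun i => win d l w i.+1) k); split.
- by rewrite size_mkseq.
- apply/(pathP (win d l w 0)) => i; rewrite size_mkseq => Hi.
  rewrite nth_mkseq //.
  have -> : nth (win d l w 0) (win d l w 0 :: mkseq (fun i => win d l w i.+1) k) i = win d l w i.
    by case: i Hi => [|i] Hi //=; rewrite nth_mkseq //; lia.
  apply: arc_win => //.
  + move=> t h1 h2; apply: Ha; lia.
  + rewrite addnC; apply: Hv => //.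
- rewrite (last_nth (win d l w 0)) size_mkseq.
  by case: k {Ha Hv} => [|k] //=; rewrite nth_mkseq.
Qed.

Lemma walk_nec d l k (x y : seq 'I_d.+1) : 0 < l -> sK_walk d l k x y ->
  exists w : nat -> 'I_d.+1,
    [/\ forall t, t < l -> nth ord0 x t = w t,
        forall t, t < l -> nth ord0 y t = w (k + t)
      & forall j, j < k -> w (l + j) != w j].
Proof.
move=> l0 [p [Hs Hp Hl]].
pose w n := if n < l then nth ord0 x n else nth ord0 (nth x p (n - l)) l.-1.
have arcs : forall i, i < k -> sK_arc d l (nth x (x :: p) i) (nth x p i).
  by move=> i Hi; apply: (pathP x Hp); rewrite Hs.
have claim : forall i, i <= k -> forall t, t < l -> nth ord0 (nth x (x :: p) i) t = w (i + t).
  elim=> [|i IH] Hi t Ht.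
    by rewrite /= /w Ht.
  have := arcs i Hi; case/and3P => vi vj /existsP [z /and3P [_ _ /eqP E]].
  rewrite /= E nth_rcons size_behead.
  move: vi; rewrite /sK_vertex => /andP [/eqP szi _].
  rewrite szi; case: ltnP => h.
    rewrite nth_behead IH; [|lia|lia]. by rewrite addSnnS.
  have et : t = l.-1 by lia.
  rewrite et eqxx /w.
  have -> : i.+1 + l.-1 < l = false by lia.
  have -> : i.+1 + l.-1 - l = i by lia.
  by rewrite E nth_rcons size_behead szi ltnn eqxx.
exists w; split.
- by move=> t Ht; rewrite /w Ht.
- move=> t Ht; rewrite -claim // -Hl (last_nth x) Hs //.
- move=> j Hj.
  have := arcs j Hj; case/and3P => vi vj /existsP [z /and3P [Hz0 _ /eqP E]].
  move: vi; rewrite /sK_vertex => /andP [/eqP szi _].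
  have := claim j (ltnW Hj) 0 l0; rewrite addn0 => <-.
  rewrite (set_nth_default z); last by rewrite szi.
  rewrite /w.
  have -> : l + j < l = false by lia.
  have -> : l + j - l = j by lia.
  by rewrite E nth_rcons size_behead szi ltnn eqxx.
Qed.

Lemma inord_eqE d n m : n <= d -> m <= d -> ((inord n : 'I_d.+1) == inord m) = (n == m).
Proof. by move=> hn hm; rewrite -val_eqE /= !inordK. Qed.

Definition yv l t := if t == 0 then (l - 2) %% 2 else if t %% 2 == 1 then 2 else (l - 1) %% 2.

Lemma lower d l (hd : 2 <= d) (hl : 3 <= l) :
  let x := mkseq (fun t => (inord (t %% 2) : 'I_d.+1)) l in
  let y := mkseq (fun t => (inord (yv l t) : 'I_d.+1)) l in
  [/\ sK_vertex d l x, sK_vertex d l y & forall k, sK_walk d l k x y -> 2 * l - 1 <= k].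
Proof.
move=> x y.
have yvb : forall t, yv l t <= d by move=> t; rewrite /yv; case: ifP => _; [|case: ifP]; lia.
split.
- rewrite /sK_vertex /x size_mkseq eqxx /=; apply/(sortedP ord0) => t.
  rewrite size_mkseq => Ht; rewrite !nth_mkseq; [|lia|lia].
  rewrite inord_eqE; lia.
- rewrite /sK_vertex /y size_mkseq eqxx /=; apply/(sortedP ord0) => t.
  rewrite size_mkseq => Ht; rewrite !nth_mkseq; [|lia|lia].
  rewrite inord_eqE // /yv /=. repeat case: ifP => ?; lia.
move=> k /(walk_nec _ _ _ _ _ (ltnW (ltnW hl))) [w [Hx Hy Hv]].
have vx : forall t, t < l -> val (w t) = t %% 2.
  move=> t Ht; rewrite -Hx // nth_mkseq // /= inordK //; lia.
have vy : forall t, t < l -> val (w (k + t)) = yv l t.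
  move=> t Ht; rewrite -Hy // nth_mkseq // /= inordK //; apply: yvb.
have vv : forall j, j < k -> val (w (l + j)) != val (w j).
  by move=> j Hj; rewrite val_eqE Hv.
rewrite leqNgt; apply/negP => hk.
case: (ltnP k l.-1) => h1.
  have := vx k.+1 ltac:(lia); have := vy 1 ltac:(lia); rewrite addn1 /yv /=. lia.
case: (ltnP k l) => h2.
  have ek : k = l.-1 by lia.
  have := vx k ltac:(lia); have := vy 0 ltac:(lia); rewrite addn0 /yv /=. lia.
case: (boolP ((k - l) %% 2 == (l - 2) %% 2)) => hp.
  have := vv (k - l) ltac:(lia); have := vx (k - l) ltac:(lia);
  have := vy 0 ltac:(lia); rewrite addn0 /yv /=.
  have -> : l + (k - l) = k by lia. lia.
have := vv (k - l).+2 ltac:(lia); have := vx (k - l).+2 ltac:(lia);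
have := vy 2 ltac:(lia); rewrite /yv /=.
have -> : l + (k - l).+2 = k + 2 by lia. lia.
Qed.

Definition pick_avoid {d} (s : seq 'I_d.+1) : 'I_d.+1 := odflt ord0 [pick z | z \notin s].

Lemma pick_avoidP d (s : seq 'I_d.+1) : size s < d.+1 -> pick_avoid s \notin s.
Proof.
move=> hs; rewrite /pick_avoid; case: pickP => [z Hz|H] //=.
have : #|'I_d.+1| <= #|s|.
  apply: subset_leq_card; apply/subsetP => z _; have := H z; rewrite /= ; case: (z \in s) => //.
rewrite card_ord => h; have := leq_trans h (card_size s) => h2; by move: hs; rewrite ltnS leqNgt h2.
Qed.

Fixpoint g {d} (x y : seq 'I_d.+1) l k (t : nat) : 'I_d.+1 :=
  match t with
  | 0 => nth ord0 x 0
  | t'.+1 => if t < l then nth ord0 x t else if t < k then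
       pick_avoid [:: nth ord0 x (t - l); g x y l k t'; nth ord0 y (t + l - k); nth ord0 y 0]
     else nth ord0 y (t - k)
  end.

Lemma gx d (x y : seq 'I_d.+1) l k t : t < l -> g x y l k t = nth ord0 x t.
Proof. by case: t => [|t] //= ->. Qed.

Lemma gy d (x y : seq 'I_d.+1) l k t : 0 < k -> l <= t -> k <= t -> g x y l k t = nth ord0 y (t - k).
Proof. case: t => [|t] /=; first lia. move=> _ h1 h2. rewrite ltnNge h1 ltnNge h2 //. Qed.

Lemma gm d (x y : seq 'I_d.+1) l k t : 0 < l -> l <= t -> t < k -> g x y l k t =
   pick_avoid [:: nth ord0 x (t - l); g x y l k t.-1; nth ord0 y (t + l - k); nth ord0 y 0].
Proof. case: t => [|t] /=; first lia. move=> _ h1 h2. rewrite ltnNge h1 h2 //. Qed.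

Lemma upper d l k (x y : seq 'I_d.+1) : 4 <= d -> 0 < l -> l < k -> k <= 2 * l - 1 ->
  sK_vertex d l x -> sK_vertex d l y ->
  (forall j, j < l -> k <= j + l -> nth ord0 x j != nth ord0 y (j + l - k)) ->
  sK_walk d l k x y.
Proof.
move=> hd l0 hk1 hk2 /andP [/eqP sx /(sortedP ord0) ax] /andP [/eqP sy /(sortedP ord0) ay] cond.
set w := g x y l k.
have gmP : forall t, l <= t -> t < k -> [/\ w t != nth ord0 x (t - l), w t != w t.-1,
     w t != nth ord0 y (t + l - k) & w t != nth ord0 y 0].
  move=> t h1 h2; have := @pick_avoidP d
    [:: nth ord0 x (t - l); w t.-1; nth ord0 y (t + l - k); nth ord0 y 0] ltac:(rewrite /=; lia).
  rewrite /w -gm // -/w !inE !negb_or => /and4P [a b c e]; split => //.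
have ex : win d l w 0 = x.
  apply: (eq_from_nth (x0 := ord0)); first by rewrite size_win sx.
  move=> t; rewrite size_win => Ht; rewrite win_nth // /w gx //.
have ey : win d l w k = y.
  apply: (eq_from_nth (x0 := ord0)); first by rewrite size_win sy.
  move=> t; rewrite size_win => Ht; rewrite win_nth // /w gy; [|lia|lia|lia].
  by congr nth; lia.
rewrite -ex -ey; apply: walk_win => //.
- move=> t Ht.
  case: (ltnP t.+1 l) => h1.
    rewrite /w !gx; [|lia|lia]; apply: ax; lia.
  case: (ltnP t.+1 k) => h2.
    have [_ b _ _] := gmP t.+1 h1 h2. by rewrite eq_sym.
  case: (ltnP t.+1 k.+1) => h3.
    have et : t.+1 = k by lia.
    have [_ _ _ e] := gmP t ltac:(lia) ltac:(lia).
    rewrite {2}/w gy; [|lia|lia|lia]. by rewrite et subnn.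
  rewrite /w !gy; [|lia|lia|lia|lia|lia|lia].
  have -> : t.+1 - k = (t - k).+1 by lia.
  apply: ay; lia.
- move=> j Hj.
  case: (ltnP (l + j) k) => h1.
    have [a _ _ _] := gmP (l + j) ltac:(lia) h1.
    rewrite {2}/w gx; last lia. by move: a; have -> : l + j - l = j by lia.
  rewrite {1}/w gy; [|lia|lia|lia].
  case: (ltnP j l) => h2.
    rewrite /w gx // eq_sym; have -> : l + j - k = j + l - k by lia.
    apply: cond => //; lia.
  have [_ _ c _] := gmP j h2 Hj.
  by rewrite eq_sym; have -> : l + j - k = j + l - k by lia.
Qed.

Theorem corollary0 (d l : nat) (hd : 4 <= d) (hl : 3 <= l) :
  sK_diameter_is d l (2 * l - 1).
Proof.
split; last first.
  have [vx vy H] := @lower d l (ltnW (ltnW hd)) hl.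
  by do 2 eexists; split; [exact vx|exact vy|exact H].
move=> x y vx vy.
have [/andP [/eqP sx /(sortedP ord0) ax] /andP [/eqP sy /(sortedP ord0) ay]] := conj vx vy.
case: (boolP (nth ord0 x l.-1 == nth ord0 y 0)) => e.
- exists (2 * l - 2); split; first lia.
  apply: upper => //; try lia.
  move=> j h1 h2.
  have [->|->] : j = l - 2 \/ j = l.-1 by lia.
  + have -> : l - 2 + l - (2 * l - 2) = 0 by lia.
    rewrite -(eqP e); have := ax (l - 2) ltac:(rewrite sx; lia).
    by have -> : (l - 2).+1 = l.-1 by lia.
  + have -> : l.-1 + l - (2 * l - 2) = 1 by lia.
    rewrite (eqP e); apply: ay; rewrite sy; lia.
- exists (2 * l - 1); split; first lia.
  apply: upper => //; try lia.
  move=> j h1 h2.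
  have -> : j = l.-1 by lia.
  by have -> : l.-1 + l - (2 * l - 1) = 0 by lia.
Qed.
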